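(* Let $(\mathbf A,\tau)$ be a state-morphism algebra. If $x,y\in\tau(A)$, then $\Theta(x,y)=\Theta_\tau(x,y)$. Consequently, $\Theta(\phi)=\Theta_\tau(\phi)$ whenever $\phi\subseteq\tau(A)^2$.
   Context: Let $F$ be an arbitrary algebraic type. A state-morphism on an algebra $\mathbf A$ of type $F$ is an endomorphism $\tau:\mathbf A\to\mathbf A$ with $\tau\circ\tau=\tau$; $(\mathbf A,\tau)$, viewed as an algebra of type $F$ extended by the unary operation $\tau$, is a state-morphism algebra. $\tau(A)=\{\tau(x):x\in A\}$. For $\phi\subseteq A^2$, $\Theta(\phi)$ is the congruence of $\mathbf A$ generated by $\phi$ and $\Theta_\tau(\phi)$ the congruence of $(\mathbf A,\tau)$ generated by $\phi$; $\Theta(x,y)=\Theta(\{(x,y)\})$, similarly $\Theta_\tau(x,y)$. *)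

(* Defs.v *)
From mathcomp Require Import all_boot.
Set Implicit Arguments. Unset Strict Implicit. Unset Printing Implicit Defensive.

Record signature := Signature { sym : Type; arity : sym -> nat }.

Record algebra (F : signature) := Algebra {
  carrier :> Type;
  op : forall f : sym F, ('I_(arity f) -> carrier) -> carrier }.
Arguments op {F} a f _ : rename.


Definition endomorphism (F : signature) (A : algebra F) (t : A -> A) : Prop :=
  forall (f : sym F) (args : 'I_(arity f) -> A),
    t (op A f args) = op A f (fun i => t (args i)).

Definition state_morphism (F : signature) (A : algebra F) (t : A -> A) : Prop :=
  endomorphism t /\ (forall x, t (t x) = t x).

Definition equivalence {T : Type} (R : T -> T -> Prop) : Prop :=
  (forall x, R x x) /\ (forall x y, R x y -> R y x) /\
  (forall x y z, R x y -> R y z -> R x z).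

Definition congruence (F : signature) (A : algebra F) (R : A -> A -> Prop) : Prop :=
  equivalence R /\
  (forall (f : sym F) (a b : 'I_(arity f) -> A),
     (forall i, R (a i) (b i)) -> R (op A f a) (op A f b)).

Definition congruence_t (F : signature) (A : algebra F) (t : A -> A)
    (R : A -> A -> Prop) : Prop :=
  congruence R /\ (forall x y, R x y -> R (t x) (t y)).

Definition Theta (F : signature) (A : algebra F) (phi : A -> A -> Prop) : A -> A -> Prop :=
  fun x y => forall R, congruence R -> (forall a b, phi a b -> R a b) -> R x y.

Definition Theta_t (F : signature) (A : algebra F) (t : A -> A)
    (phi : A -> A -> Prop) : A -> A -> Prop :=
  fun x y => forall R, congruence_t t R -> (forall a b, phi a b -> R a b) -> R x y.

Definition pair_rel {T : Type} (x y : T) : T -> T -> Prop :=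
  fun a b => a = x /\ b = y.

Definition in_image {T : Type} (t : T -> T) (x : T) : Prop := exists z, x = t z.

(* Main.v *)
Require Import Defs.
From mathcomp Require Import all_boot.

Lemma Theta_cong {F : signature} {A : algebra F} (phi : A -> A -> Prop) :
  congruence (Theta phi).
Proof.
split; [split; [|split]|].
- by move=> x R [[Rr _] _] _.
- by move=> x y H R HR Hp; case: (HR) => [[_ [Rs _]] _]; apply: Rs; apply: H.
- move=> x y z H1 H2 R HR Hp; case: (HR) => [[_ [_ Rt]] _].
  by apply: (Rt _ y); [apply: H1|apply: H2].
- move=> f a b H R HR Hp; case: (HR) => [_ Ro]; apply: Ro => i; exact: H.
Qed.

Lemma Theta_t_cong {F : signature} {A : algebra F} t (phi : A -> A -> Prop) :
  congruence (Theta_t t phi).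
Proof.
split; [split; [|split]|].
- by move=> x R [[[Rr _] _] _] _.
- by move=> x y H R HR Hp; case: (HR) => [[[_ [Rs _]] _] _]; apply: Rs; apply: H.
- move=> x y z H1 H2 R HR Hp; case: (HR) => [[[_ [_ Rt]] _] _].
  by apply: (Rt _ y); [apply: H1|apply: H2].
- move=> f a b H R HR Hp; case: (HR) => [[_ Ro] _]; apply: Ro => i; exact: H.
Qed.

Lemma gen (F : signature) (A : algebra F) (tau : A -> A) :
  state_morphism tau ->
  forall phi : A -> A -> Prop,
     (forall a b, phi a b -> in_image tau a /\ in_image tau b) ->
     forall a b : A, Theta phi a b <-> Theta_t tau phi a b.
Proof.
move=> [Hend Hid] phi Himg a b; split.
- move=> H; apply: H; first exact: (Theta_t_cong tau phi).
  by move=> u v Huv R [HR _] Hp; apply: Hp.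
- move=> H; apply: H; last by move=> u v Huv R _ Hp; apply: Hp.
  split; first exact: (Theta_cong phi).
  have C : congruence (Theta phi) := Theta_cong phi.
  case: C => [[Cr [Cs Ct]] Co].
  pose R' := fun x y => Theta phi x y /\ Theta phi (tau x) (tau y).
  have HR' : congruence R'.
    split; [split; [|split]|].
    + by move=> x; split; apply: Cr.
    + by move=> x y [H1 H2]; split; apply: Cs.
    + by move=> x y z [H1 H2] [H3 H4]; split; [apply: (Ct _ y)|apply: (Ct _ (tau y))].
    + move=> f u v Huv; split; first by apply: Co => i; case: (Huv i).
      rewrite !Hend; apply: Co => i; by case: (Huv i).
  have Hp' : forall u v, phi u v -> R' u v.
    move=> u v Huv; have [[z1 E1] [z2 E2]] := Himg _ _ Huv.
    have T1 : tau u = u by rewrite E1 Hid.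
    have T2 : tau v = v by rewrite E2 Hid.
    by rewrite /R' T1 T2; split; move=> R _ Hp; apply: Hp.
  move=> x y Hxy; exact: (proj2 (Hxy R' HR' Hp')).
Qed.

Theorem lemma3p4 (F : signature) (A : algebra F) (tau : A -> A) :
  state_morphism tau ->
  (forall x y : A, in_image tau x -> in_image tau y ->
     forall a b : A, Theta (pair_rel x y) a b <-> Theta_t tau (pair_rel x y) a b) /\
  (forall phi : A -> A -> Prop,
     (forall a b, phi a b -> in_image tau a /\ in_image tau b) ->
     forall a b : A, Theta phi a b <-> Theta_t tau phi a b).
Proof.
move=> Hs; split; last exact: gen.
move=> x y Hx Hy; apply: gen => // u v [-> ->]; by split.
Qed.
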